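(* Fix $n\ge 2$, a dictator agent $t$, another agent $i\ne t$, and a constant $a\in(0,\frac12)$. For $b\in(0,1)$ and a profile $\mathbf{x}$ with $x_l=\min\mathbf{x}$, $x_r=\max\mathbf{x}$, $L=x_r-x_l$, define $$h_b(\mathbf{x})=\begin{cases} x_t+\max\left\{\frac{2(1-b)}{b}(x_t-x_l),\; x_r-x_t\right\} & \text{if } x_t\in[x_l,\,x_l+bL),\\[2pt] x_t-\max\left\{x_t-x_l,\; \frac{2b}{1-b}(x_r-x_t)\right\} & \text{if } x_t\in[x_l+bL,\,x_r].\end{cases}$$ Let $f$ be the mechanism that on $\mathbf{x}$ outputs $l_1=x_t$ and $l_2=h_a(\mathbf{x})$ if $x_i\le x_t$, and $l_2=h_{1-a}(\mathbf{x})$ if $x_i>x_t$. Then the approximation ratio of $f$ for social cost is $\frac{1-a}{a}(n-1)$, i.e. $SC(f,\mathbf{x})\le\frac{1-a}{a}(n-1)\,OPT(\mathbf{x})$ for every profile $\mathbf{x}\in\mathbb{R}^n$.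
   Context: Two-facility game on a line: agent $j$ has location $x_j\in\mathbb{R}$. For facility locations $\{l_1,l_2\}$, an agent at $y$ has cost $\min\{|l_1-y|,|l_2-y|\}$. $SC(f,\mathbf{x})$ is the sum over all agents of their costs under $f(\mathbf{x})$, and $OPT(\mathbf{x})=\min_{l_1,l_2\in\mathbb{R}}\sum_j\min\{|l_1-x_j|,|l_2-x_j|\}$. In the paper, ''the approximation ratio of $f$ is $\gamma$'' is defined to mean $SC(f,\mathbf{x})\le\gamma\,OPT(\mathbf{x})$ for all profiles $\mathbf{x}$. *)

(* Defs.v *)
From HB Require Import structures.
From mathcomp Require Import all_boot all_order all_algebra.
From mathcomp Require Import all_classical all_reals.
Set Implicit Arguments. Unset Strict Implicit. Unset Printing Implicit Defensive.
Import Order.TTheory GRing.Theory Num.Theory.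
Local Open Scope ring_scope.
Local Open Scope classical_set_scope.

Section TwoFacility.
Variables (R : realType) (n : nat).

(* x_l = min of the profile, x_r = max of the profile (n >= 1 assumed when used;
   the seed x t only matters for the empty profile). *)
Definition pmin (x : 'I_n -> R) (t : 'I_n) : R := \big[Num.min/x t]_(j < n) x j.
Definition pmax (x : 'I_n -> R) (t : 'I_n) : R := \big[Num.max/x t]_(j < n) x j.

Definition cost (x : 'I_n -> R) (l1 l2 : R) : R :=
  \sum_(j < n) Num.min `|l1 - x j| `|l2 - x j|.

Definition OPT (x : 'I_n -> R) : R :=
  inf (range (fun p : R * R => cost x p.1 p.2)).

Definition h (b : R) (t : 'I_n) (x : 'I_n -> R) : R :=
  let xl := pmin x t in
  let xr := pmax x t in
  let L := xr - xl in
  if x t < xl + b * L then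
    x t + Num.max ((2 * (1 - b) / b) * (x t - xl)) (xr - x t)
  else
    x t - Num.max (x t - xl) ((2 * b / (1 - b)) * (xr - x t)).

Definition mech (a : R) (t i : 'I_n) (x : 'I_n -> R) : R * R :=
  (x t, if x i <= x t then h a t x else h (1 - a) t x).

Definition SC (a : R) (t i : 'I_n) (x : 'I_n -> R) : R :=
  cost x (mech a t i x).1 (mech a t i x).2.

End TwoFacility.

(* Main.v *)
Require Import Defs.
From HB Require Import structures.
From mathcomp Require Import all_boot all_order all_algebra.
From mathcomp Require Import all_classical all_reals.
From mathcomp Require Import ring lra.
Import Order.TTheory GRing.Theory Num.Theory.
Set Implicit Arguments. Unset Strict Implicit.
Local Open Scope ring_scope.

Definition m3 {R : realType} (u v w : R) := Num.min `|u - v| (Num.min `|v - w| `|u - w|).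

Ltac leaf c O xj xt := apply/orP; first [ left; apply/andP; split; lra
                              | right; apply/andP; split; lra
  | have [?|?] := leP (xj - xt) (c * O); [left|right]; apply/andP; split; lra ].

Lemma core (R : realType) (xl xt xj xr O c p : R) :
  xl <= xt -> xt <= xr -> xl <= xj -> xj <= xr -> 1 <= c -> 0 <= p -> p <= 2 * c ->
  xt - xl <= c * (xr - xt) -> 0 <= O ->
  m3 xj xt xr <= O -> m3 xt xj xr <= O -> m3 xl xt xj <= O ->
  Num.min `|xt - xj| `|xt + Num.max (p * (xt - xl)) (xr - xt) - xj| <= c * O.
Proof.
move=> h1 h2 h3 h4 hc hp0 hp h5 hO H1 H2 H3.
move: H1 H2 H3; rewrite /m3 !ge_min !ler_norml.
have cO : O <= c * O by rewrite -[X in X <= _]mul1r ler_wpM2r.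
have pd : p * (xt - xl) <= 2 * c * (xt - xl) by rewrite ler_wpM2r // subr_ge0.
have ce : xr - xt <= O -> c * (xr - xt) <= c * O by move=> ?; rewrite ler_wpM2l //; lra.
have cd : xt - xl <= O -> c * (xt - xl) <= c * O by move=> ?; rewrite ler_wpM2l //; lra.
have [e1|e1] := leP (xr - xt) O; [move: (ce e1) => {}ce | clear ce];
(have [d1|d1] := leP (xt - xl) O; [move: (cd d1) => {}cd | clear cd]);
(rewrite maxEle; case: (leP xj xt) => hj;
[ move=> H _ _ | (case: (leP (p * (xt - xl)) (xr - xt)) => hM; [move=> _ H _ | move=> _ _ H])]);
case/orP: H => [/andP[? ?]|/orP[/andP[? ?]|/andP[? ?]]]; leaf c O xj xt.
Qed.

Lemma m3N (R : realType) (u v w : R) : m3 (-u) (-v) (-w) = m3 u v w.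
Proof. by rewrite /m3 -!opprD !normrN. Qed.

Lemma tri3 (R : realType) (l1 l2 u v w : R) :
  m3 u v w <= Num.min `|l1 - u| `|l2 - u| + Num.min `|l1 - v| `|l2 - v|
              + Num.min `|l1 - w| `|l2 - w|.
Proof.
have T : forall l x y : R, `|x - y| <= `|l - x| + `|l - y|.
  by move=> l x y; rewrite (distrC l x); apply: ler_distD.
have m1 : m3 u v w <= `|u - v| by rewrite /m3 ge_min lexx.
have m2 : m3 u v w <= `|v - w| by rewrite /m3 ge_min ge_min lexx orbT.
have m4 : m3 u v w <= `|u - w| by rewrite /m3 ge_min ge_min lexx !orbT.
have := T l1 u v; have := T l2 u v; have := T l1 v w; have := T l2 v w;
have := T l1 u w; have := T l2 u w.
have := normr_ge0 (l1 - u); have := normr_ge0 (l2 - u); have := normr_ge0 (l1 - v);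
have := normr_ge0 (l2 - v); have := normr_ge0 (l1 - w); have := normr_ge0 (l2 - w).
rewrite !minEle; do 3 case: ifP => ?; lra.
Qed.

Lemma hbound (R : realType) (xl xt xj xr O c b : R) :
  xl <= xt -> xt <= xr -> xl <= xj -> xj <= xr -> 1 <= c -> 0 <= O ->
  0 <= 2 * (1 - b) / b -> 2 * (1 - b) / b <= 2 * c ->
  0 <= 2 * b / (1 - b) -> 2 * b / (1 - b) <= 2 * c ->
  (xt < xl + b * (xr - xl) -> xt - xl <= c * (xr - xt)) ->
  (~~ (xt < xl + b * (xr - xl)) -> xr - xt <= c * (xt - xl)) ->
  m3 xj xt xr <= O -> m3 xt xj xr <= O -> m3 xl xt xj <= O ->
  m3 xj xt xl <= O -> m3 xt xj xl <= O -> m3 xr xt xj <= O ->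
  Num.min `|xt - xj|
    `|(if xt < xl + b * (xr - xl) then
         xt + Num.max (2 * (1 - b) / b * (xt - xl)) (xr - xt)
       else xt - Num.max (xt - xl) (2 * b / (1 - b) * (xr - xt))) - xj| <= c * O.
Proof.
move=> h1 h2 h3 h4 hc hO p1 p2 q1 q2 hA hB H1 H2 H3 H4 H5 H6.
case: ifP => hif.
  by apply: core => //; apply: hA; rewrite hif.
have E : forall u v : R, - u - - v = v - u by move=> u v; ring.
have := @core R (- xr) (- xt) (- xj) (- xl) O c (2 * b / (1 - b)).
rewrite !E !m3N !lerN2 distrC maxC.
have E2 : forall M, - xt + M - - xj = - (xt - M - xj) by move=> M; ring.
rewrite E2 normrN; apply => //; apply: hB; by rewrite hif.
Qed.

Lemma pmin_le (R : realType) n (x : 'I_n -> R) t j : pmin x t <= x j.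
Proof. by rewrite /pmin (bigD1 j) //= ge_min lexx. Qed.

Lemma pmax_ge (R : realType) n (x : 'I_n -> R) t j : x j <= pmax x t.
Proof. by rewrite /pmax (bigD1 j) //= le_max lexx. Qed.

Lemma pmin_ex (R : realType) n (x : 'I_n -> R) t : exists j, pmin x t = x j.
Proof.
rewrite /pmin; apply: (big_ind (fun v => exists j, v = x j)).
- by exists t.
- move=> _ _ [j1 ->] [j2 ->]; rewrite minEle; case: ifP => _; eauto.
- by move=> j _; exists j.
Qed.

Lemma pmax_ex (R : realType) n (x : 'I_n -> R) t : exists j, pmax x t = x j.
Proof.
rewrite /pmax; apply: (big_ind (fun v => exists j, v = x j)).
- by exists t.
- move=> _ _ [j1 ->] [j2 ->]; rewrite maxEle; case: ifP => _; eauto.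
- by move=> j _; exists j.
Qed.

Lemma cost_ge0 (R : realType) n (x : 'I_n -> R) l1 l2 : 0 <= cost x l1 l2.
Proof. by rewrite /cost; apply: sumr_ge0 => j _; rewrite le_min !normr_ge0. Qed.

Lemma opt_lb (R : realType) n (x : 'I_n -> R) p q s : m3 (x p) (x q) (x s) <= OPT x.
Proof.
rewrite /OPT; apply: lb_le_inf.
  by exists (cost x 0 0); exists (0, 0).
move=> _ [[l1 l2] _ <-] /=.
have c0 := cost_ge0 x l1 l2.
case: (eqVneq p q) => [->|pq].
  by apply: le_trans c0; rewrite /m3 ge_min subrr normr0 lexx.
case: (eqVneq q s) => [->|qs].
  by apply: le_trans c0; rewrite /m3 ge_min ge_min subrr normr0 lexx orbT.
case: (eqVneq p s) => [->|ps].
  by apply: le_trans c0; rewrite /m3 ge_min ge_min subrr normr0 lexx !orbT.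
rewrite /cost (bigD1 p) //= (bigD1 q) /=; last by rewrite eq_sym.
rewrite (bigD1 s) /=; last by rewrite eq_sym ps eq_sym qs.
have := tri3 l1 l2 (x p) (x q) (x s).
have : 0 <= \sum_(i < n | (i != p) && (i != q) && (i != s))
              Num.min `|l1 - x i| `|l2 - x i|.
  by apply: sumr_ge0 => j _; rewrite le_min !normr_ge0.
lra.
Qed.

Theorem theorem8 (R : realType) (n : nat) (t i : 'I_n) (a : R)
  (hn : (2 <= n)%N) (hit : i != t) (ha0 : 0 < a) (ha1 : a < 1 / 2)
  (x : 'I_n -> R) :
  SC a t i x <= (1 - a) / a * (n - 1)%:R * OPT x.
Proof.
set c := (1 - a) / a.
set O := OPT x.
have hO : 0 <= O.
  by have := opt_lb x t t t; rewrite /m3 subrr normr0 !minxx.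
have a1 : 0 < 1 - a by lra.
have hc : 1 <= c by rewrite /c ler_pdivlMr // mul1r; lra.
have cle : forall u v, a * u <= (1 - a) * v -> u <= c * v.
  by move=> u v huv; rewrite /c mulrAC ler_pdivlMr // mulrC.
have k1 : a / (1 - a) <= 1 by rewrite ler_pdivrMr // mul1r; lra.
have k0 : 0 <= a / (1 - a) by rewrite divr_ge0 //; lra.
have c0 : 0 <= c by lra.
have E1 : 2 * (1 - a) / a = 2 * c by rewrite /c mulrA.
have E2 : 2 * a / (1 - a) = 2 * (a / (1 - a)) by rewrite mulrA.
have E3 : 1 - (1 - a) = a by ring.
have [jl hl] := pmin_ex x t.
have [jr hr] := pmax_ex x t.
have per : forall j, Num.min `|x t - x j|
   `|(if x i <= x t then h a t x else h (1 - a) t x) - x j| <= c * O.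
  move=> j.
  have l1 := pmin_le x t t; have l2 := pmax_ge x t t.
  have l3 := pmin_le x t j; have l4 := pmax_ge x t j.
  have T1 := opt_lb x j t jr; have T2 := opt_lb x t j jr; have T3 := opt_lb x jl t j.
  have T4 := opt_lb x j t jl; have T5 := opt_lb x t j jl; have T6 := opt_lb x jr t j.
  rewrite -hl -hr in T1 T2 T3 T4 T5 T6.
  case: ifP => _; rewrite /h; apply: hbound => //.
  - by rewrite E1; lra.
  - by rewrite E1.
  - by rewrite E2; lra.
  - by rewrite E2; lra.
  - move=> hA; apply: cle.
    have : 0 <= (1 - 2 * a) * (x t - pmin x t) by apply: mulr_ge0; lra.
    have : 0 <= (1 - 2 * a) * (pmax x t - x t) by apply: mulr_ge0; lra.
    lra.
  - rewrite -leNgt => hB; apply: cle; lra.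
  - rewrite E3 E2; lra.
  - by rewrite E3 E2; lra.
  - rewrite E3 E1; lra.
  - by rewrite E3 E1.
  - move=> hA; apply: cle; lra.
  - rewrite -leNgt => hB; apply: cle.
    have : 0 <= (1 - 2 * a) * (x t - pmin x t) by apply: mulr_ge0; lra.
    have : 0 <= (1 - 2 * a) * (pmax x t - x t) by apply: mulr_ge0; lra.
    lra.
rewrite /SC /mech /= /cost (bigD1 t) //= subrr normr0 (minEle 0) normr_ge0 add0r.
apply: le_trans; first by apply: ler_sum => j _; exact: per j.
rewrite sumr_const cardC1 card_ord.
by rewrite -subn1 -(mulr_natr (c * O)) (mulrAC c O).
Qed.
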